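(* Let $\{\mathcal G,(\Gamma_0,\Gamma_1),(\widetilde\Gamma_0,\widetilde\Gamma_1)\}$ be a triple for the adjoint pair $\{S,\widetilde S\}$ such that $\rho(A_0)$ and $\rho(\widetilde A_0)$ are nonempty, and let $M,\widetilde M$ be the associated Weyl functions. Let $B_1,B_2,\widetilde B_1,\widetilde B_2$ be linear operators in $\mathcal G$. Then for all $\lambda\in\rho(A_0)$ and $\mu\in\rho(\widetilde A_0)$: (i) $\lambda\in\sigma_p(A_{B_1B_2})$ if and only if $\ker(I-B_2M(\lambda)B_1)\neq\{0\}$, and in this case $\ker(A_{B_1B_2}-\lambda)=\{f_\lambda\in\ker(T-\lambda):\Gamma_0f_\lambda=B_1\varphi \text{ for some }\varphi\in\ker(I-B_2M(\lambda)B_1)\}$; (ii) $\mu\in\sigma_p(\widetilde A_{\widetilde B_1\widetilde B_2})$ if and only if $\ker(I-\widetilde B_2\widetilde M(\mu)\widetilde B_1)\neq\{0\}$, and in this case $\ker(\widetilde A_{\widetilde B_1\widetilde B_2}-\mu)=\{g_\mu\in\ker(\widetilde T-\mu):\widetilde\Gamma_0g_\mu=\widetilde B_1\psi\text{ for some }\psi\in\ker(I-\widetilde B_2\widetilde M(\mu)\widetilde B_1)\}$.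
   Context: Let $\mathfrak H$ be a separable Hilbert space. An adjoint pair $\{S,\widetilde S\}$ consists of densely defined closed operators $S,\widetilde S$ in $\mathfrak H$ with $(Sf,g)=(f,\widetilde Sg)$ for all $f\in\operatorname{dom}S$, $g\in\operatorname{dom}\widetilde S$. Fix operators $T\subset S^*$ and $\widetilde T\subset\widetilde S^*$ which are cores, i.e. $\overline T=S^*$ and $\overline{\widetilde T}=\widetilde S^*$. A triple $\{\mathcal G,(\Gamma_0,\Gamma_1),(\widetilde\Gamma_0,\widetilde\Gamma_1)\}$ for $\{S,\widetilde S\}$ consists of a Hilbert space $\mathcal G$ and linear maps $\Gamma_0,\Gamma_1:\operatorname{dom}T\to\mathcal G$, $\widetilde\Gamma_0,\widetilde\Gamma_1:\operatorname{dom}\widetilde T\to\mathcal G$. Put $A_0:=T\upharpoonright\ker\Gamma_0$ and $\widetilde A_0:=\widetilde T\upharpoonright\ker\widetilde\Gamma_0$. For $\lambda\in\rho(A_0)$ one has $\operatorname{dom}T=\ker\Gamma_0\dotplus\ker(T-\lambda)$, so $\Gamma_0\upharpoonright\ker(T-\lambda)$ is injective; similarly for $\widetilde T$. The $\gamma$-fields are $\gamma(\lambda):=(\Gamma_0\upharpoonright\ker(T-\lambda))^{-1}$, $\widetilde\gamma(\mu):=(\widetilde\Gamma_0\upharpoonright\ker(\widetilde T-\mu))^{-1}$; the Weyl functions are $M(\lambda):=\Gamma_1\gamma(\lambda)$, $\lambda\in\rho(A_0)$, and $\widetilde M(\mu):=\widetilde\Gamma_1\widetilde\gamma(\mu)$,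 $\mu\in\rho(\widetilde A_0)$. Products of (possibly unbounded, non-densely defined) operators have their natural domains, e.g. $\operatorname{dom}(B_1B_2)=\{\varphi\in\operatorname{dom}B_2:B_2\varphi\in\operatorname{dom}B_1\}$. Define $A_{B_1B_2}f:=Tf$ on $\operatorname{dom}A_{B_1B_2}:=\{f\in\operatorname{dom}T:\Gamma_1f\in\operatorname{dom}(B_1B_2),\ B_1B_2\Gamma_1f=\Gamma_0f\}$ and $\widetilde A_{\widetilde B_1\widetilde B_2}g:=\widetilde Tg$ on $\operatorname{dom}\widetilde A_{\widetilde B_1\widetilde B_2}:=\{g\in\operatorname{dom}\widetilde T:\widetilde\Gamma_1g\in\operatorname{dom}(\widetilde B_1\widetilde B_2),\ \widetilde B_1\widetilde B_2\widetilde\Gamma_1g=\widetilde\Gamma_0g\}$. $\sigma_p$ denotes the set of eigenvalues. *)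

(* Defs.v *)
(* Complex scalars are R[i] (complex numbers over a
   real type R); Hilbert spaces are complete normed R[i]-modules whose norm
   comes from an inner product (linear in the first argument). *)
From mathcomp Require Import all_boot all_order all_algebra.
From mathcomp Require Import all_classical all_reals all_analysis.
From mathcomp Require Import complex.
Set Implicit Arguments.
Unset Strict Implicit.
Unset Printing Implicit Defensive.
Import Order.TTheory GRing.Theory Num.Theory.
Local Open Scope classical_set_scope.
Local Open Scope ring_scope.

Section Defs.
Variable R : realType.
Notation C := (R[i]).

(* [ip] is an inner product inducing the norm of [H] (H is complete by its
   structure [completeNormedModType]). *)
Definition is_inner_product (H : normedModType C) (ip : H -> H -> C) : Prop :=
  [/\ forall (a : C) (x y z : H), ip (a *: x + y) z = a * ip x z + ip y z,
      forall x y : H, ip y x = (ip x y)^* &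
      forall x : H, ip x x = `|x| ^+ 2].

Definition is_hilbert (H : completeNormedModType C) (ip : H -> H -> C) : Prop :=
  is_inner_product ip.

Definition separable (H : normedModType C) : Prop :=
  exists D : set H, countable D /\ closure D = setT.

(* An operator from U to V: a domain and an action (values off the domain are
   irrelevant). *)
Record op (U V : Type) := Op { dom : set U ; act : U -> V }.

Definition subspace (U : lmodType C) (D : set U) : Prop :=
  D 0 /\ forall (a : C) x y, D x -> D y -> D (a *: x + y).

Definition linear_on (U V : lmodType C) (D : set U) (f : U -> V) : Prop :=
  forall (a : C) x y, D x -> D y -> f (a *: x + y) = a *: f x + f y.

Definition linear_op (U V : lmodType C) (A : op U V) : Prop :=
  subspace (dom A) /\ linear_on (dom A) (act A).

Definition graph (U V : Type) (A : op U V) : set (U * V) :=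
  [set p | dom A p.1 /\ p.2 = act A p.1].

Definition densely_defined (H : normedModType C) (A : op H H) : Prop :=
  closure (dom A) = setT.

Definition closed_op (H : normedModType C) (A : op H H) : Prop :=
  closed (graph A).

Definition adjoint_graph (H : normedModType C) (ip : H -> H -> C) (S : op H H)
  : set (H * H) :=
  [set p | forall f, dom S f -> ip (act S f) p.1 = ip f p.2].

Definition adjoint_pair (H : normedModType C) (ip : H -> H -> C) (S St : op H H)
  : Prop :=
  [/\ linear_op S /\ linear_op St, densely_defined S /\ densely_defined St,
      closed_op S /\ closed_op St &
      forall f g, dom S f -> dom St g -> ip (act S f) g = ip f (act St g)].

Definition core_of_adjoint (H : normedModType C) (ip : H -> H -> C)
  (S T : op H H) : Prop :=
  [/\ linear_op T, graph T `<=` adjoint_graph ip S &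
      closure (graph T) = adjoint_graph ip S].

Definition restrict (U V : Type) (A : op U V) (D : set U) : op U V :=
  Op (dom A `&` D) (act A).

Definition kerf (U V : lmodType C) (f : U -> V) : set U := [set x | f x = 0].

Definition opmul (U V W : Type) (B1 : op V W) (B2 : op U V) : op U W :=
  Op [set x | dom B2 x /\ dom B1 (act B2 x)] (fun x => act B1 (act B2 x)).

Definition ker_minus (U : lmodType C) (A : op U U) (l : C) : set U :=
  [set f | dom A f /\ act A f = l *: f].

Definition ker_I_minus (U : lmodType C) (B : op U U) : set U :=
  [set x | dom B x /\ x - act B x = 0].

Definition point_spectrum (U : lmodType C) (A : op U U) : set C :=
  [set l | exists f, f <> 0 /\ ker_minus A l f].

Definition resolvent (H : normedModType C) (A : op H H) : set C :=
  [set l | (forall g : H, exists! f, dom A f /\ act A f - l *: f = g) /\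
           exists c : C, 0 <= c /\
             forall f, dom A f -> `|f| <= c * `|act A f - l *: f| ].

Definition A0_of (H G : lmodType C) (T : op H H) (Gam0 : H -> G) : op H H :=
  restrict T (kerf Gam0).

(* gamma(lambda) = (Gamma_0 restricted to ker (T - lambda))^{-1} *)
Definition gamma_field (H : normedModType C) (G : lmodType C) (T : op H H)
  (Gam0 : H -> G) (l : C) : op G H :=
  Op (Gam0 @` ker_minus T l)
     (fun phi => xget 0 [set f | ker_minus T l f /\ Gam0 f = phi]).

Definition weyl (H : normedModType C) (G : lmodType C) (T : op H H)
  (Gam0 Gam1 : H -> G) (l : C) : op G G :=
  Op (dom (gamma_field T Gam0 l)) (fun phi => Gam1 (act (gamma_field T Gam0 l) phi)).

Definition A_B (H G : lmodType C) (T : op H H) (Gam0 Gam1 : H -> G)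
  (B1 B2 : op G G) : op H H :=
  Op [set f | dom T f /\ dom (opmul B1 B2) (Gam1 f) /\
              act (opmul B1 B2) (Gam1 f) = Gam0 f]
     (act T).

Definition triple (H G : lmodType C) (T Tt : op H H)
  (Gam0 Gam1 Gamt0 Gamt1 : H -> G) : Prop :=
  [/\ linear_on (dom T) Gam0, linear_on (dom T) Gam1,
      linear_on (dom Tt) Gamt0 & linear_on (dom Tt) Gamt1].

End Defs.

(* Main.v *)
Require Import Defs.
From mathcomp Require Import all_boot all_order all_algebra.
From mathcomp Require Import all_classical all_reals all_analysis.
From mathcomp Require Import complex.
Import Order.TTheory GRing.Theory Num.Theory.
Local Open Scope classical_set_scope.
Local Open Scope ring_scope.

Section Gen.
Variable R : realType.
Variables (H : normedModType R[i]) (G : lmodType R[i]).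

Lemma lin0 (U V : lmodType R[i]) (D : set U) (f : U -> V) :
  linear_on D f -> D 0 -> f 0 = 0.
Proof.
move=> hf D0; have := hf 1 0 0 D0 D0; rewrite scaler0 add0r scale1r => h.
have : f 0 + f 0 - f 0 = f 0 - f 0 by rewrite -h.
by rewrite addrK subrr.
Qed.

Arguments lin0 {U V D f}.

Lemma linB (U V : lmodType R[i]) (D : set U) (f : U -> V) x y :
  linear_on D f -> D x -> D y -> f (x - y) = f x - f y.
Proof.
move=> hf Dx Dy; have := hf (-1) y x Dy Dx.
by rewrite !scaleN1r addrC [- f y + _]addrC.
Qed.

Arguments linB {U V D f x y}.

Lemma subB (U : lmodType R[i]) (D : set U) x y :
  Defs.subspace D -> D x -> D y -> D (x - y).
Proof.
move=> [_ hD] Dx Dy; have := hD (-1) y x Dy Dx.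
by rewrite scaleN1r addrC.
Qed.

Arguments subB {U D x y}.

Variables (T : op H H) (Gam0 Gam1 : H -> G) (B1 B2 : op G G) (l : R[i]).
Hypotheses (hT : linear_op T) (h0 : linear_on (dom T) Gam0)
  (h1 : linear_on (dom T) Gam1) (hB1 : linear_op B1) (hB2 : linear_op B2)
  (hl : resolvent (A0_of T Gam0) l).

Lemma T0 : dom T 0 /\ act T 0 = 0.
Proof. by case: hT => [[D0 _] la]; split => //; exact: (lin0 la D0). Qed.

Lemma ker0 : ker_minus T l 0.
Proof. by case: T0 => D0 A0; split => //; rewrite A0 scaler0. Qed.

Lemma Gam00 : Gam0 0 = 0.
Proof. by apply: (lin0 h0); case: T0. Qed.

Lemma Gam10 : Gam1 0 = 0.
Proof. by apply: (lin0 h1); case: T0. Qed.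

Lemma B0 (B : op G G) : linear_op B -> dom B 0 /\ act B 0 = 0.
Proof. by case=> [[D0 _] la]; split => //; exact: (lin0 la D0). Qed.

Arguments B0 {B}.

Lemma uniqk f g : ker_minus T l f -> ker_minus T l g -> Gam0 f = Gam0 g -> f = g.
Proof.
move=> [Df Tf] [Dg Tg] e.
have Dh : dom T (f - g) by apply: subB => //; case: hT.
have Th : act T (f - g) = l *: (f - g).
  by rewrite (linB hT.2 Df Dg) Tf Tg scalerBr.
have Gh : Gam0 (f - g) = 0 by rewrite (linB h0 Df Dg) e subrr.
case: hl => /(_ 0) [x [_ ux]] _.
have P1 : dom (A0_of T Gam0) (f - g) /\ act (A0_of T Gam0) (f - g) - l *: (f - g) = 0.
  by split; [split|rewrite /= Th subrr].
have P2 : dom (A0_of T Gam0) 0 /\ act (A0_of T Gam0) 0 - l *: 0 = 0.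
  by case: T0 => D0 A0; split; [split => //; exact: Gam00|rewrite /= A0 scaler0 subrr].
apply: subr0_eq; by rewrite -(ux _ P1) (ux _ P2).
Qed.

Arguments uniqk {f g}.

Lemma weylE f : ker_minus T l f ->
  dom (weyl T Gam0 Gam1 l) (Gam0 f) /\ act (weyl T Gam0 Gam1 l) (Gam0 f) = Gam1 f.
Proof.
move=> kf; split; first by exists f.
rewrite /=; congr Gam1.
have [k1 k2] : ker_minus T l (xget 0 [set g | ker_minus T l g /\ Gam0 g = Gam0 f]) /\
   Gam0 (xget 0 [set g | ker_minus T l g /\ Gam0 g = Gam0 f]) = Gam0 f.
  by apply: (@xgetPex _ 0 [set g | ker_minus T l g /\ Gam0 g = Gam0 f]); exists f.
exact: uniqk.
Qed.

Arguments weylE {f}.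

Let K := ker_I_minus (opmul B2 (opmul (weyl T Gam0 Gam1 l) B1)).
Let AB := A_B T Gam0 Gam1 B1 B2.

Lemma setEq : ker_minus AB l =
  [set f | ker_minus T l f /\ exists phi, K phi /\ Gam0 f = act B1 phi].
Proof.
apply/seteqP; split => f /=.
- move=> [[Df [[dB2 dB1] e]] Tf].
  have kf : ker_minus T l f by []. simpl in e.
  have [dM aM] := weylE kf; simpl in *.
  split => //; exists (act B2 (Gam1 f)); split => //.
  rewrite /K /ker_I_minus /= e aM; split; last by rewrite subrr.
  by split => //; split => //; rewrite e.
- move=> [kf [phi [[[[dB1 dM] dB2] ephi] e]]].
  have [_ aM] := weylE kf; simpl in *.
  move: dB2 ephi; rewrite /= -e aM => dB2 ephi.
  have ep : act B2 (Gam1 f) = phi by apply/esym/subr0_eq.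
  split; last by case: kf.
  split; first by case: kf.
  by rewrite /= ep; split.
Qed.

Lemma K0 : K 0.
Proof.
have [d1 a1] := B0 hB1; have [d2 a2] := B0 hB2.
have [dM aM] := weylE ker0; simpl in *; simpl in *.
rewrite Gam00 Gam10 in dM aM.
rewrite /K /ker_I_minus /= a1 aM a2 subrr; split => //; split => //; split => //; by rewrite ?a1.
Qed.

Lemma gen :
  (point_spectrum AB l <-> K <> [set 0]) /\
  (point_spectrum AB l -> ker_minus AB l =
      [set f | ker_minus T l f /\ exists phi, K phi /\ Gam0 f = act B1 phi]).
Proof.
split; last by move=> _; exact: setEq.
split.
- move=> [f [nf kf]] eK.
  move: kf; rewrite setEq => -[kf [phi [Kp e]]].
  have : phi = 0 by rewrite eK in Kp.
  move=> p0; move: e; rewrite p0 (B0 hB1).2 -Gam00 => e.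
  by apply: nf; apply: (uniqk kf ker0).
- move=> nK.
  have [phi [Kp np]] : exists phi, K phi /\ phi <> 0.
    apply: contra_notP nK => hn; apply/seteqP; split => x /=.
    + by move=> Kx; apply: contra_notP hn => nx; exists x.
    + by move=> ->; exact: K0.
  have Kp' := Kp; move: Kp' => [[[dB1 [f kf ef]] dB2] ep].
  exists f; split; last by rewrite setEq; split => //; exists phi.
  move=> f0; apply: np.
  move: ep; rewrite /= -ef f0 Gam00.
  have [_ aM] := weylE ker0; simpl in *; rewrite Gam00 Gam10 in aM.
  by rewrite aM (B0 hB2).2 subr0.
Qed.

End Gen.
Theorem theorem4p2 (R : realType)
  (H : completeNormedModType R[i]) (ipH : H -> H -> R[i])
  (G : completeNormedModType R[i]) (ipG : G -> G -> R[i])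
  (S St T Tt : op H H) (Gam0 Gam1 Gamt0 Gamt1 : H -> G)
  (B1 B2 Bt1 Bt2 : op G G) :
  is_hilbert ipH -> separable H -> is_hilbert ipG ->
  adjoint_pair ipH S St ->
  core_of_adjoint ipH S T -> core_of_adjoint ipH St Tt ->
  triple T Tt Gam0 Gam1 Gamt0 Gamt1 ->
  resolvent (A0_of T Gam0) !=set0 ->
  resolvent (A0_of Tt Gamt0) !=set0 ->
  linear_op B1 -> linear_op B2 -> linear_op Bt1 -> linear_op Bt2 ->
  forall (l mu : R[i]),
  resolvent (A0_of T Gam0) l -> resolvent (A0_of Tt Gamt0) mu ->
  (* (i) *)
  ((point_spectrum (A_B T Gam0 Gam1 B1 B2) l <->
      ker_I_minus (opmul B2 (opmul (weyl T Gam0 Gam1 l) B1)) <> [set 0])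
   /\ (point_spectrum (A_B T Gam0 Gam1 B1 B2) l ->
      ker_minus (A_B T Gam0 Gam1 B1 B2) l =
      [set f | ker_minus T l f /\
               exists phi, ker_I_minus (opmul B2 (opmul (weyl T Gam0 Gam1 l) B1)) phi
                           /\ Gam0 f = act B1 phi]))
  /\
  (* (ii) *)
  ((point_spectrum (A_B Tt Gamt0 Gamt1 Bt1 Bt2) mu <->
      ker_I_minus (opmul Bt2 (opmul (weyl Tt Gamt0 Gamt1 mu) Bt1)) <> [set 0])
   /\ (point_spectrum (A_B Tt Gamt0 Gamt1 Bt1 Bt2) mu ->
      ker_minus (A_B Tt Gamt0 Gamt1 Bt1 Bt2) mu =
      [set g | ker_minus Tt mu g /\
               exists psi, ker_I_minus (opmul Bt2 (opmul (weyl Tt Gamt0 Gamt1 mu) Bt1)) psi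
                           /\ Gamt0 g = act Bt1 psi])).
Proof.
move=> _ _ _ _ [hT _ _] [hTt _ _] [g0 g1 gt0 gt1] _ _ hB1 hB2 hBt1 hBt2 l mu hl hmu.
split.
- exact: (@gen _ _ _ _ _ _ _ _ _ hT g0 g1 hB1 hB2 hl).
- exact: (@gen _ _ _ _ _ _ _ _ _ hTt gt0 gt1 hBt1 hBt2 hmu).
Qed.
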